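(* Let $A\subseteq B$ be commutative semirings ($A$ a subsemiring of $B$), let $S=A[x_1,\dots,x_n]$, and let $\rho$ be a prime congruence on $B$. Call a subset $Y\subseteq B^n$ a $\rho$-algebraic variety (over $A$) if $Y=Z_\rho(T)(B)$ for some non-empty $T\subseteq S\times S$. Then: (1) the union of two $\rho$-algebraic varieties is a $\rho$-algebraic variety; (2) the intersection of any family of $\rho$-algebraic varieties is a $\rho$-algebraic variety; (3) $\emptyset$ and $B^n$ are $\rho$-algebraic varieties.
   Context: A (commutative) semiring is a set with operations $+,\cdot$ such that $(A,+)$ is a commutative monoid with identity $0$, $(A,\cdot)$ a commutative monoid with identity $1\neq0$, multiplication distributes over addition and $0a=0$. A congruence on a semiring $B$ is an equivalence relation $\rho\subseteq B\times B$ with $(a,b),(c,d)\in\rho\Rightarrow(a+c,b+d),(ac,bd)\in\rho$. The twisted product is $(a,b)\ast(c,d)=(ac+bd,ad+bc)$; a congruence $\rho\neq B\times B$ is prime if $(a,b)\ast(c,d)\in\rho$ implies $(a,b)\in\rho$ or $(c,d)\in\rho$. $S=A[x_1,\dots,x_n]$ is the polynomial semiring over $A$; for $P\in B^n$ and $f\in S$, $f(P)\in B$ is the evaluation. For non-empty $T\subseteq S\times S$, $Z_\rho(T)(B)=\{P\in B^n:\ (f(P),g(P))\in\rho\ \text{for all}\ (f,g)\in T\}$. *)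

(* Defs.v *)
From HB Require Import structures.
From mathcomp Require Import all_boot all_order all_algebra.
From mathcomp Require Import finmap.
Set Implicit Arguments. Unset Strict Implicit. Unset Printing Implicit Defensive.
Import GRing.Theory.
Local Open Scope ring_scope.


Definition monom (n : nat) := {ffun 'I_n -> nat}.

Definition polyS (A : comNzSemiRingType) (n : nat) :=
  {fsfun monom n -> A with 0}.

Definition peval (A B : comNzSemiRingType) (iota : A -> B) (n : nat)
    (f : polyS A n) (P : 'I_n -> B) : B :=
  \sum_(m <- finsupp f) iota (f m) * \prod_(i < n) P i ^+ m i.

(* Congruence on a semiring B (relation given as a Prop-valued predicate
   on pairs: rho a b means (a,b) in rho). *)
Definition congruence (B : comNzSemiRingType) (rho : B -> B -> Prop) :=
  [/\ (forall a, rho a a), (forall a b, rho a b -> rho b a),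
      (forall a b c, rho a b -> rho b c -> rho a c),
      (forall a b c d, rho a b -> rho c d -> rho (a + c) (b + d)) &
      (forall a b c d, rho a b -> rho c d -> rho (a * c) (b * d))].

Definition prime_congruence (B : comNzSemiRingType) (rho : B -> B -> Prop) :=
  [/\ congruence rho,
      (exists a b, ~ rho a b) &
      (forall a b c d, rho (a * c + b * d) (a * d + b * c) ->
          rho a b \/ rho c d)].

Definition Zrho (A B : comNzSemiRingType) (iota : A -> B) (n : nat)
    (rho : B -> B -> Prop) (T : polyS A n * polyS A n -> Prop)
    (P : 'I_n -> B) : Prop :=
  forall fg, T fg -> rho (peval iota fg.1 P) (peval iota fg.2 P).

Definition rho_variety (A B : comNzSemiRingType) (iota : A -> B) (n : nat)
    (rho : B -> B -> Prop) (Y : ('I_n -> B) -> Prop) : Prop :=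
  exists T : polyS A n * polyS A n -> Prop,
    (exists t, T t) /\ forall P, Y P <-> Zrho iota rho T P.

(* Main.v *)
Require Import Defs.
From HB Require Import structures.
From mathcomp Require Import all_boot all_order all_algebra.
From mathcomp Require Import finmap.

From Stdlib Require Import Classical.
Import GRing.Theory.
Local Open Scope ring_scope.

Section P.
Variables (A B : comNzSemiRingType) (iota : {rmorphism A -> B}) (n : nat).

Definition mono (m : monom n) (P : 'I_n -> B) := \prod_(i < n) P i ^+ m i.

Lemma peval_sub (f : polyS A n) (D : seq (monom n)) P :
  uniq D -> {subset finsupp f <= D} ->
  peval iota f P = \sum_(m <- D) iota (f m) * mono m P.
Proof.
move=> uD sD; rewrite /peval; symmetry.
rewrite (bigID (fun m => m \in finsupp f)) /=.
rewrite [X in (_ + X)%R]big1 ?addr0; last first.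
  by move=> m /fsfun_dflt ->; rewrite rmorph0 mul0r.
rewrite -big_filter; apply: perm_big.
apply: uniq_perm; first exact: filter_uniq.
  exact: fset_uniq.
by move=> m; rewrite mem_filter; case: (boolP (m \in finsupp f)) => // /sD ->.
Qed.

Definition poly_of (L : seq (monom n * A)) : polyS A n :=
  [fsfun m in [fset x.1 | x in L]%fset => \sum_(x <- L | x.1 == m) x.2 | 0].

Lemma peval_poly_of L P :
  peval iota (poly_of L) P = \sum_(x <- L) iota x.2 * mono x.1 P.
Proof.
rewrite (@peval_sub _ [fset x.1 | x in L]%fset) ?fset_uniq //; last first.
  by apply/fsubsetP; apply: finsupp_sub.
under eq_big_seq => m mL do rewrite /poly_of fsfun_fun mL rmorph_sum big_distrl /=.
under eq_bigr => m _ do rewrite big_mkcond.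
rewrite exchange_big /=; apply: eq_big_seq => x xL.
rewrite (bigD1_seq x.1) ?fset_uniq //=; last first.
  by apply/imfsetP; exists x.
rewrite eqxx big1 ?addr0 // => m /negPf.
by rewrite eq_sym => ->.
Qed.

Definition madd (m1 m2 : monom n) : monom n := [ffun i => (m1 i + m2 i)%N].

Lemma mono_add m1 m2 P : mono (madd m1 m2) P = mono m1 P * mono m2 P.
Proof.
rewrite /mono -big_split /=; apply: eq_bigr => i _.
by rewrite ffunE exprD.
Qed.

Definition Lm (f h : polyS A n) : seq (monom n * A) :=
  [seq (madd m1 m2, f m1 * h m2) | m1 <- finsupp f, m2 <- finsupp h].

Lemma peval_Lm f h P :
  \sum_(x <- Lm f h) iota x.2 * mono x.1 P = peval iota f P * peval iota h P.
Proof.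
rewrite /Lm big_allpairs_dep /peval big_distrl /=; apply: eq_bigr => m1 _.
rewrite big_distrr /=; apply: eq_bigr => m2 _.
by rewrite rmorphM mono_add mulrACA.
Qed.

Definition pmul2 (f h g k : polyS A n) := poly_of (Lm f h ++ Lm g k).

Lemma peval_pmul2 f h g k P :
  peval iota (pmul2 f h g k) P =
  peval iota f P * peval iota h P + peval iota g P * peval iota k P.
Proof. by rewrite /pmul2 peval_poly_of big_cat /= !peval_Lm. Qed.

Definition pzero := poly_of [::].
Definition pone := poly_of [:: ([ffun=> 0%N], 1)].

Lemma peval_pzero P : peval iota pzero P = 0.
Proof. by rewrite peval_poly_of big_nil. Qed.

Lemma peval_pone P : peval iota pone P = 1.
Proof.
rewrite peval_poly_of big_cons big_nil addr0 /= rmorph1 mul1r /mono.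
by apply: big1 => i _; rewrite ffunE expr0.
Qed.
End P.
Arguments pmul2 {A n}.

Theorem theorem3p4 (A B : comNzSemiRingType) (iota : {rmorphism A -> B})
    (iota_inj : injective iota) (n : nat) (rho : B -> B -> Prop)
    (hrho : prime_congruence rho) :
  [/\ (forall Y1 Y2 : ('I_n -> B) -> Prop,
          rho_variety iota rho Y1 -> rho_variety iota rho Y2 ->
          rho_variety iota rho (fun P => Y1 P \/ Y2 P)),
      (forall (I : Type) (Y : I -> ('I_n -> B) -> Prop),
          (forall i, rho_variety iota rho (Y i)) ->
          rho_variety iota rho (fun P => forall i, Y i P)) &
      (rho_variety iota rho (fun _ : 'I_n -> B => False) /\
       rho_variety iota rho (fun _ : 'I_n -> B => True))].
Proof.
case: hrho => [[rr rs rt radd rmul] [a0 [b0 nab]] rprime].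
have n10 : ~ rho 1 0.
  move=> h10; apply: nab; apply: (rt _ 0); last apply: rs.
    by have := rmul _ _ _ _ (rr a0) h10; rewrite mulr1 mulr0.
  by have := rmul _ _ _ _ (rr b0) h10; rewrite mulr1 mulr0.
split.
- move=> Y1 Y2 [T1 [[t1 Tt1] H1]] [T2 [[t2 Tt2] H2]].
  pose T := fun fg : polyS A n * polyS A n => exists p1 p2, [/\ T1 p1, T2 p2 &
    fg = (pmul2 p1.1 p2.1 p1.2 p2.2, pmul2 p1.1 p2.2 p1.2 p2.1)].
  exists T; split; first by exists (pmul2 t1.1 t2.1 t1.2 t2.2, pmul2 t1.1 t2.2 t1.2 t2.1), t1, t2.
  move=> P; split.
  + move=> HY fg [p1 [p2 [Tp1 Tp2 ->]]] /=; rewrite !peval_pmul2.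
    case: HY => [/H1 Z|/H2 Z].
    * have hab := Z _ Tp1.
      have := radd _ _ _ _ (rmul _ _ _ _ hab (rr (peval iota p2.1 P)))
               (rmul _ _ _ _ (rs _ _ hab) (rr (peval iota p2.2 P))).
      by rewrite [X in rho _ X]addrC.
    * have hcd := Z _ Tp2.
      exact: (radd _ _ _ _ (rmul _ _ _ _ (rr (peval iota p1.1 P)) hcd)
               (rmul _ _ _ _ (rr (peval iota p1.2 P)) (rs _ _ hcd))).
  + move=> Z.
    case: (classic (exists p1, T1 p1 /\ ~ rho (peval iota p1.1 P) (peval iota p1.2 P))).
    * move=> [p1 [Tp1 np1]]; right; apply/H2 => p2 Tp2.
      have := Z (pmul2 p1.1 p2.1 p1.2 p2.2, pmul2 p1.1 p2.2 p1.2 p2.1).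
      rewrite /= !peval_pmul2 => Hz.
      have [//|//] := rprime _ _ _ _ (Hz (ex_intro _ p1 (ex_intro _ p2 (And3 Tp1 Tp2 erefl)))).
    * move=> nex; left; apply/H1 => p1 Tp1.
      by apply: NNPP => np; apply: nex; exists p1.
- move=> I Y HY.
  pose T := fun fg : polyS A n * polyS A n => fg = (pzero A n, pzero A n) \/
    exists i (T' : polyS A n * polyS A n -> Prop),
      [/\ (exists t, T' t), (forall P, Y i P <-> Zrho iota rho T' P) & T' fg].
  exists T; split; first by exists (pzero A n, pzero A n); left.
  move=> P; split.
  + move=> HP fg [->|[i [T' [_ HT' Tfg]]]] /=.
      by rewrite peval_pzero; apply: rr.
    exact: (proj1 (HT' P) (HP i)).
  + move=> Z i; case: (HY i) => T' [ne HT']; apply/HT' => fg Tfg.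
    by apply: Z; right; exists i, T'.
- split.
  + exists (fun fg => fg = (pone A n, pzero A n)); split; first by eexists.
    move=> P; split => // Z; apply: n10.
    by have := Z _ erefl; rewrite /= peval_pone peval_pzero.
  + exists (fun fg => fg = (pzero A n, pzero A n)); split; first by eexists.
    move=> P; split => // _ fg -> /=; rewrite peval_pzero; exact: rr.
Qed.
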